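(* Consider a rate-$1/2$ binary convolutional code $\mathcal{C}$ whose two coded bits $[c_{1,t},c_{2,t}]$ at each time $t$ are mapped, without any interleaving, to one 4-PAM symbol (BICM-T), transmitted over a real AWGN channel with signal-to-noise ratio $\gamma=1/N_0$, and decoded by a soft-input Viterbi decoder treating the two L-values per time instant as independent. Model the per-time-instant decoding metrics by the Gaussian (zero-crossing) approximations $$\mathrm{p}_1(\lambda)=\tfrac12\big[\psi(\lambda;-3\alpha,2\alpha)+\psi(\lambda;-\alpha,2\alpha)\big],\quad \mathrm{p}_2(\lambda)=\psi(\lambda;-\alpha,2\alpha),\quad \mathrm{p}_\Sigma(\lambda)=\psi(\lambda;-4\alpha,8\alpha),$$ where $\alpha=4\gamma\Delta^2$, $\Delta=1/\sqrt5$, and $\psi(\lambda;\mu,\sigma^2)=\frac{1}{\sqrt{2\pi\sigma^2}}\exp\!\big(-\frac{(\lambda-\mu)^2}{2\sigma^2}\big)$. Define $$\mathrm{PEP}_{\mathrm T}(w_1,w_2,w_\Sigma)=\int_0^\infty \{\mathrm{p}_1\}^{*w_1}*\{\mathrm{p}_2\}^{*w_2}*\{\mathrm{p}_\Sigma\}^{*w_\Sigma}(\lambda)\,d\lambda$$ and $\mathrm{UB}_{\mathrm T}=\sum_{w_1,w_2,w_\Sigma}\beta^{\mathcal C}_{w_1,w_2,w_\Sigma}\,\mathrm{PEP}_{\mathrm T}(w_1,w_2,w_\Sigma)$. Then $$\mathrm{UB}_{\mathrm T}=\sum_{w_1,w_2,w_\Sigma}\beta^{\mathcal C}_{w_1,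w_2,w_\Sigma}\left(\tfrac12\right)^{w_1}\sum_{j=0}^{w_1}\binom{w_1}{j}\,Q\!\left(\sqrt{\frac{(w_1+w_2+4w_\Sigma+2j)^2}{w_1+w_2+4w_\Sigma}\cdot\frac{2\gamma}{5}}\right).$$
   Context: The 4-PAM constellation is $\{-3\Delta,-\Delta,\Delta,3\Delta\}$ with $\Delta=1/\sqrt5$ (unit average energy), labeled by the binary reflected Gray code $[1,1]\mapsto-3\Delta$, $[1,0]\mapsto-\Delta$, $[0,0]\mapsto\Delta$, $[0,1]\mapsto3\Delta$; the noise has variance $N_0/2$. An error event $\mathbf E=[\mathbf e_1^{T},\dots,\mathbf e_T^{T}]$ is a $2\times T$ binary matrix that is the codeword of a trellis path diverging from the zero state and remerging with it after $T$ stages; $\mathbf i_{\mathbf E}$ is the corresponding input sequence and $d_H(\mathbf i_{\mathbf E})$ its Hamming weight. For an error event, $w_{\mathbf E,1}$ (resp. $w_{\mathbf E,2}$) is the number of columns equal to $[1,0]^T$ (resp. $[0,1]^T$), and $w_{\mathbf E,\Sigma}$ is the number of columns equal to $[1,1]^T$. The spectrum $\beta^{\mathcal C}_{w_1,w_2,w_\Sigma}$ is the sum of $d_H(\mathbf i_{\mathbf E})$ over all error events with $(w_{\mathbf E,1},w_{\mathbf E,2},w_{\mathbf E,\Sigma})=(w_1,w_2,w_\Sigma)$. $\{p\}^{*w}$ denotes the $w$-fold self-convolution, $*$ convolution, and $Q(x)=\frac1{\sqrt{2\pi}}\int_x^\infty e^{-u^2/2}du$. *)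

(* Defs.v *)
From HB Require Import structures.
From mathcomp Require Import all_boot all_order all_algebra.
From mathcomp Require Import all_classical all_reals all_analysis.
Set Implicit Arguments. Unset Strict Implicit. Unset Printing Implicit Defensive.
Import Order.TTheory GRing.Theory Num.Theory.
Import numFieldNormedType.Exports.
Local Open Scope classical_set_scope.
Local Open Scope ring_scope.

Section Defs.
Variable R : realType.
Local Notation mu := (@lebesgue_measure R).

Definition psi (l m s2 : R) : R :=
  expR (- (l - m) ^+ 2 / (2 * s2)) / Num.sqrt (2 * pi * s2).

Definition Qfun (x : R) : R :=
  Rintegral mu `[x, +oo[ (fun u => expR (- u ^+ 2 / 2) / Num.sqrt (2 * pi)).

Definition conv (f g : R -> R) (x : R) : R :=
  Rintegral mu setT (fun y => f y * g (x - y)).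

Fixpoint convl (f : R -> R) (fs : seq (R -> R)) : R -> R :=
  match fs with
  | [::] => f
  | g :: gs => conv f (convl g gs)
  end.

Definition Delta : R := (Num.sqrt 5)^-1.
Definition alpha (gamma : R) : R := 4 * gamma * Delta ^+ 2.

Definition p1 (gamma : R) (l : R) : R :=
  2^-1 * (psi l (- 3 * alpha gamma) (2 * alpha gamma)
          + psi l (- alpha gamma) (2 * alpha gamma)).
Definition p2 (gamma : R) (l : R) : R := psi l (- alpha gamma) (2 * alpha gamma).
Definition pS (gamma : R) (l : R) : R := psi l (- 4 * alpha gamma) (8 * alpha gamma).

(* {p1}^{*w1} * {p2}^{*w2} * {pS}^{*wS}, as a list of factors *)
Definition factors (gamma : R) (w1 w2 wS : nat) : seq (R -> R) :=
  nseq w1 (p1 gamma) ++ nseq w2 (p2 gamma) ++ nseq wS (pS gamma).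

(* PEP_T(w1,w2,wS) = int_0^oo of the convolution (only meaningful when
   w1 + w2 + wS >= 1) *)
Definition PEP_T (gamma : R) (w1 w2 wS : nat) : R :=
  match factors gamma w1 w2 wS with
  | [::] => 0
  | f :: fs => Rintegral mu `[0, +oo[ (convl f fs)
  end.

Definition PEP_closed (gamma : R) (w1 w2 wS : nat) : R :=
  let n : R := (w1 + w2 + 4 * wS)%:R in
  (2^-1) ^+ w1 * \sum_(j < w1.+1)
     ('C(w1, j))%:R * Qfun (Num.sqrt ((n + 2 * j%:R) ^+ 2 / n * (2 * gamma / 5))).
End Defs.

(* ---- Rate-1/2 binary convolutional code, given by its trellis:
   a finite-state encoder with zero state s0, next-state function nxt
   and output function out (one input bit, two coded bits [c1; c2]). *)
Record conv_code := ConvCode {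
  cstate : finType;
  s0 : cstate;
  nxt : cstate -> bool -> cstate;
  out : cstate -> bool -> bool * bool
}.

Section Code.
Variable C : conv_code.

Fixpoint states (s : cstate C) (i : seq bool) : seq (cstate C) :=
  match i with
  | [::] => [::]
  | b :: i' => nxt s b :: states (nxt s b) i'
  end.

Fixpoint columns (s : cstate C) (i : seq bool) : seq (bool * bool) :=
  match i with
  | [::] => [::]
  | b :: i' => out s b :: columns (nxt s b) i'
  end.

(* i is the input of an error event: the trellis path starting at the zero
   state diverges from the all-zero path at the first stage (first input
   bit 1), does not visit the zero state at stages 1..T-1 and remerges with
   the zero state after the T-th stage. *)
Definition error_event (i : seq bool) : Prop :=
  let st := states (s0 C) i in
  [/\ (0 < size i)%N, head false i = true,
      last (s0 C) st = s0 C &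
      forall k, (k < (size i).-1)%N -> nth (s0 C) st k != s0 C].

Definition wE1 (i : seq bool) : nat := count (pred1 (true, false)) (columns (s0 C) i).
Definition wE2 (i : seq bool) : nat := count (pred1 (false, true)) (columns (s0 C) i).
Definition wES (i : seq bool) : nat := count (pred1 (true, true)) (columns (s0 C) i).
Definition dH (i : seq bool) : nat := count id i.

(* spectrum beta^C_{w1,w2,wS} (an extended nonnegative real, possibly +oo) *)
Definition beta (R : realType) (w1 w2 wS : nat) : \bar R :=
  (\esum_(i in [set i | error_event i /\ wE1 i = w1 /\ wE2 i = w2 /\ wES i = wS])
     ((dH i)%:R)%:E)%E.
End Code.

(* Main.v *)
Require Import Defs.
From HB Require Import structures.
From mathcomp Require Import all_boot all_order all_algebra.
From mathcomp Require Import all_classical all_reals all_analysis.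
From mathcomp Require Import ring lra zify measurable_realfun.
Import Order.TTheory GRing.Theory Num.Theory.
Import numFieldNormedType.Exports.
Local Open Scope classical_set_scope.
Local Open Scope ring_scope.



Section G.
Variable R : realType.
Local Notation mu := (@lebesgue_measure R).

Lemma psi_normal (x m s : R) : 0 < s -> psi x m s = normal_pdf m (Num.sqrt s) x.
Proof.
move=> s0; rewrite /normal_pdf gt_eqF ?sqrtr_gt0 //.
rewrite /normal_peak /normal_fun sqr_sqrtr ?ltW // /psi.
have e1 : s *+ 2 = 2 * s by rewrite mulr_natl.
have e2 : s * pi *+ 2 = 2 * pi * s by rewrite -mulr_natl mulrCA [s * _]mulrC.
by rewrite e1 e2 mulrC.
Qed.

Lemma psiE (m s : R) : 0 < s -> (fun x => psi x m s) = normal_pdf m (Num.sqrt s).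
Proof. by move=> s0; apply/funext => x; rewrite psi_normal. Qed.

Lemma psi_ge0 (x m s : R) : 0 <= psi x m s.
Proof. by rewrite /psi divr_ge0 ?expR_ge0 ?sqrtr_ge0. Qed.

Lemma measurable_psi (m s : R) : 0 < s -> measurable_fun (@setT R) (fun x : R => psi x m s).
Proof. by move=> s0; rewrite psiE //; exact: measurable_normal_pdf. Qed.

Lemma measurable_psiB (x m s : R) : 0 < s -> measurable_fun (@setT R) (fun y : R => psi (x - y) m s).
Proof.
move=> s0; apply: (@measurableT_comp _ _ _ _ _ _ (fun z => psi z m s)); first exact: measurable_psi.
exact: (measurable_realfun.measurable_funB (f:=cst x) (g:=id)).

Qed.

Lemma continuous_psi (m s : R) : 0 < s -> continuous (fun x => psi x m s).
Proof.
by move=> s0; rewrite psiE //; apply: continuous_normal_pdf; rewrite gt_eqF ?sqrtr_gt0.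
Qed.

Lemma integral_psi (m s : R) : 0 < s -> (\int[mu]_x (psi x m s)%:E = 1)%E.
Proof.
move=> s0; rewrite (_ : (fun x => (psi x m s)%:E) = (fun x => (normal_pdf m (Num.sqrt s) x)%:E)).
  exact: integral_normal_pdf.
by apply/funext => x; rewrite psi_normal.
Qed.

Lemma psi_prod (x y m1 m2 s1 s2 : R) : 0 < s1 -> 0 < s2 ->
  psi y m1 s1 * psi (x - y) m2 s2 =
  psi x (m1 + m2) (s1 + s2) * psi y ((m1 * s2 + (x - m2) * s1) / (s1 + s2)) (s1 * s2 / (s1 + s2)).
Proof.
move=> h1 h2.
have hS : 0 < s1 + s2 by rewrite addr_gt0.
rewrite /psi !mulf_div -!expRD -!sqrtrM; last 2 first.
- by rewrite mulr_ge0 // ?mulr_ge0 ?pi_ge0 // ltW.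
- by rewrite mulr_ge0 // ?mulr_ge0 ?pi_ge0 // ltW.
have n1 : s1 != 0 by rewrite gt_eqF.
have n2 : s2 != 0 by rewrite gt_eqF.
have nS : s1 + s2 != 0 by rewrite gt_eqF.
congr (expR _ / Num.sqrt _).
  by field; rewrite n1 n2 nS.
by field; rewrite nS.
Qed.
End G.



Section G2.
Variable R : realType.
Local Notation mu := (@lebesgue_measure R).

Lemma conv_mix N K (a m s : 'I_N -> R) (b m' s' : 'I_K -> R) (x : R) :
  (forall i, 0 <= a i) -> (forall i, 0 < s i) -> (forall j, 0 <= b j) -> (forall j, 0 < s' j) ->
  Defs.conv (fun y => \sum_(i < N) a i * psi y (m i) (s i))
       (fun y => \sum_(j < K) b j * psi y (m' j) (s' j)) x
  = \sum_(i < N) \sum_(j < K) a i * b j * psi x (m i + m' j) (s i + s' j).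
Proof.
move=> a0 s0 b0 s'0.
pose ms i j := (m i * s' j + (x - m' j) * s i) / (s i + s' j).
pose ss i j := s i * s' j / (s i + s' j).
have ss0 i j : 0 < ss i j by rewrite /ss divr_gt0 ?mulr_gt0 ?addr_gt0.
pose c (p : 'I_N * 'I_K) := a p.1 * b p.2 * psi x (m p.1 + m' p.2) (s p.1 + s' p.2).
have c0 p : 0 <= c p by rewrite /c !mulr_ge0 ?psi_ge0.
rewrite /Defs.conv /Rintegral.
transitivity (fine (\int[mu]_(y in setT)
   (\sum_(p : 'I_N * 'I_K) (c p * psi y (ms p.1 p.2) (ss p.1 p.2))%:E))%E).
  congr fine; apply: eq_integral => y _.
  rewrite sumEFin; congr EFin.
  have -> : \sum_(p : 'I_N * 'I_K) c p * psi y (ms p.1 p.2) (ss p.1 p.2)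
     = \sum_(i < N) \sum_(j < K) c (i, j) * psi y (ms i j) (ss i j) by rewrite pair_bigA.
  rewrite mulr_suml; apply: eq_bigr => i _.
  rewrite mulr_sumr; apply: eq_bigr => j _.
  by rewrite mulrACA psi_prod // /c /= !mulrA.
rewrite ge0_integral_sum //; last 2 first.
- move=> p; apply/measurable_EFinP; apply: measurable_funM => //.
  exact: measurable_psi.
- by move=> p y _; rewrite lee_fin mulr_ge0 ?psi_ge0.
have I p : (\int[mu]_x (c p * psi x (ms p.1 p.2) (ss p.1 p.2))%:E = (c p)%:E)%E.
  under eq_integral do rewrite EFinM.
  rewrite ge0_integralZl ?integral_psi ?mule1 ?lee_fin //.
  - by apply/measurable_EFinP; exact: measurable_psi.
  - by move=> y _; rewrite lee_fin psi_ge0.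
under eq_bigr do rewrite I.
by rewrite sumEFin /= pair_bigA.
Qed.

Lemma Qfun_psi (x0 : R) : Qfun x0 = Rintegral mu `[x0, +oo[ (fun u => psi u 0 1).
Proof.
by rewrite /Qfun; congr Rintegral; apply/funext => u; rewrite /psi subr0 !mulr1.
Qed.

Lemma tail_psi (m s : R) : 0 < s ->
  (\int[mu]_(x in `[0%R, +oo[) (psi x m s)%:E = (Qfun (- m / Num.sqrt s))%:E)%E.
Proof.
move=> s0.
have sq0 : 0 < Num.sqrt s by rewrite sqrtr_gt0.
pose F (x : R) := (x - m) / Num.sqrt s.
have F'E : F^`()%classic = cst (Num.sqrt s)^-1.
  apply/funext => x; rewrite /F derive1E deriveM// deriveD// derive_cst scaler0.
  by rewrite add0r derive_id derive_cst addr0 scaler1.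
have FE : F 0 = - m / Num.sqrt s by rewrite /F sub0r.
have -> : (\int[mu]_(x in `[0%R, +oo[) (psi x m s)%:E =
   \int[mu]_(x in `[0%R, +oo[) ((((fun u => psi u 0 1) \o F) * F^`()%classic) x)%:E)%E.
  apply: eq_integral => x _; congr EFin; rewrite F'E /=.
  transitivity (psi (F x) 0 1 * (Num.sqrt s)^-1); last by [].
  rewrite /psi /F subr0 !mulr1 expr_div_n sqr_sqrtr ?ltW //.
  rewrite (@sqrtrM _ (2 * pi) s) ?mulr_ge0 ?pi_ge0 //.
  rewrite (_ : - ((x - m) ^+ 2 / s) / 2 = - (x - m) ^+ 2 / (2 * s)); last first.
    by field; rewrite gt_eqF.
  by rewrite -[RHS]mulrA -invfM.
rewrite -increasing_ge0_integration_by_substitutiony.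
- rewrite FE Qfun_psi /Rintegral fineK //.
  rewrite ge0_fin_numE; last by apply: integral_ge0 => x _; rewrite lee_fin psi_ge0.
  apply: (le_lt_trans (y := (\int[mu]_x (psi x 0 1)%:E)%E)); last first.
    by rewrite integral_psi // ltry.
  apply: ge0_subset_integral => //.
  + by apply/measurable_EFinP; exact: measurable_psi.
  + by move=> x _; rewrite lee_fin psi_ge0.
- move=> x y _ _ xy; rewrite /F ltr_pM2r ?invr_gt0 //.
  by rewrite ltrD2r.
- by rewrite F'E => ? _; exact: cst_continuous.
- by rewrite F'E; exact: is_cvg_cst.
- by rewrite F'E; exact: is_cvg_cst.
- split.
  + by move=> x _; rewrite /F.
  + apply: cvg_at_right_filter; rewrite /F.
    apply: cvgM; last exact: cvg_cst.
    apply: cvgB; [exact: cvg_id | exact: cvg_cst].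
- rewrite /F; apply/gt0_cvgMly; first by rewrite invr_gt0.
  exact: cvg_addrr.
- by apply: continuous_subspaceT; exact: continuous_psi.
- by move=> ? _; exact: psi_ge0.
Qed.
End G2.



Section G3.
Variable R : realType.
Variable g : R.
Hypothesis hg : 0 < g.
Local Notation mu := (@lebesgue_measure R).

Lemma alpha_gt0 : 0 < alpha g.
Proof.
by rewrite /alpha /Delta mulr_gt0 ?mulr_gt0 // exprn_gt0 // invr_gt0 sqrtr_gt0.
Qed.

Lemma mul_psi_eq (c x m1 m2 s1 s2 : R) : m1 = m2 -> s1 = s2 -> c * psi x m1 s1 = c * psi x m2 s2.
Proof. by move=> -> ->. Qed.

Lemma psi_eq (x m1 m2 s1 s2 : R) : m1 = m2 -> s1 = s2 -> psi x m1 s1 = psi x m2 s2.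
Proof. by move=> -> ->. Qed.

Lemma psi2_eq (c x m1 m2 m1' m2' s s' : R) : m1 = m1' -> m2 = m2' -> s = s' ->
  c * (psi x m1 s + psi x m2 s) = c * (psi x m1' s' + psi x m2' s').
Proof. by move=> -> -> ->. Qed.

Definition Mx (w n : nat) : R -> R := fun x =>
  (2^-1) ^+ w * \sum_(j < w.+1) ('C(w, j))%:R *
     psi x (- alpha g * (n%:R + 2 * j%:R)) (2 * alpha g * n%:R).

Lemma conv1 (m1 s1 m2 s2 x : R) : 0 < s1 -> 0 < s2 ->
  Defs.conv (fun y => psi y m1 s1) (fun y => psi y m2 s2) x = psi x (m1 + m2) (s1 + s2).
Proof.
move=> h1 h2.
transitivity (Defs.conv (fun y => \sum_(i < 1) 1 * psi y m1 s1)
                        (fun y => \sum_(j < 1) 1 * psi y m2 s2) x).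
  by congr Defs.conv; apply/funext => y; rewrite big_ord1 mul1r.
rewrite (@conv_mix R 1 1 (fun=> 1) (fun=> m1) (fun=> s1) (fun=> 1) (fun=> m2) (fun=> s2) x
   (fun=> ler01) (fun=> h1) (fun=> ler01) (fun=> h2)).
by rewrite !big_ord1 !mul1r.
Qed.

Lemma Mx0 n : Mx 0 n = fun x => psi x (- alpha g * n%:R) (2 * alpha g * n%:R).
Proof.
by apply/funext => x; rewrite /Mx big_ord1 expr0 bin0 !mul1r /= mulr0 addr0.
Qed.

Lemma pascal (w : nat) (h : nat -> R) :
  \sum_(j < w.+2) ('C(w.+1, j))%:R * h j =
  \sum_(j < w.+1) ('C(w, j))%:R * h j + \sum_(j < w.+1) ('C(w, j))%:R * h j.+1.
Proof.
rewrite big_ord_recl bin0.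
under eq_bigr => j _ do rewrite lift0 binS natrD mulrDl.
rewrite big_split /= addrA [in RHS]big_ord_recl bin0.
congr (_ + _ + _).
by rewrite big_ord_recr /= bin_small // mul0r addr0.
Qed.

Lemma step1 w n m : (0 < n)%N -> m = n.+1 ->
  Defs.conv (p1 g) (Mx w n) = Mx w.+1 m.
Proof.
move=> hn ->; apply/funext => x.
have ha := alpha_gt0.
pose mm (i : 'I_2) := if val i == 0%N then - 3 * alpha g else - alpha g.
transitivity (Defs.conv (fun y => \sum_(i < 2) 2^-1 * psi y (mm i) (2 * alpha g))
  (fun y => \sum_(j < w.+1) ((2^-1) ^+ w * ('C(w, j))%:R) *
      psi y (- alpha g * (n%:R + 2 * j%:R)) (2 * alpha g * n%:R)) x).
  congr Defs.conv; apply/funext => y.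
    by rewrite /p1 big_ord_recl big_ord1 -mulrDr.
  by rewrite /Mx mulr_sumr; apply: eq_bigr => j _; rewrite mulrA.
rewrite conv_mix; first last.
- by move=> j; apply: mulr_gt0; [apply: mulr_gt0 | rewrite ltr0n].
- by move=> j; rewrite mulr_ge0 ?exprn_ge0 ?invr_ge0 ?ler0n.
- by move=> i; apply: mulr_gt0.
- by move=> i; rewrite invr_ge0 ler0n.
have E (a b c d : R) : a * (b * c) * d = a * b * c * d by rewrite !mulrA.
rewrite big_ord_recl big_ord1 /= /Mx.
rewrite (pascal w (fun j : nat => psi x (- alpha g * ((n.+1)%:R + 2 * j%:R)) (2 * alpha g * (n.+1)%:R))).
rewrite mulrDr addrC !mulr_sumr; congr (_ + _); apply: eq_bigr => j _;
  rewrite exprS E [RHS]mulrA; apply: mul_psi_eq; rewrite /mm /=; ring.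
Qed.

Lemma step2 n m : (0 < n)%N -> m = n.+1 ->
  Defs.conv (p2 g) (Mx 0 n) = Mx 0 m.
Proof.
move=> hn ->; rewrite !Mx0; apply/funext => x.
have ha := alpha_gt0.
rewrite (_ : p2 g = fun y => psi y (- alpha g) (2 * alpha g)) // conv1; last 2 first.
- by apply: mulr_gt0.
- by apply: mulr_gt0; [apply: mulr_gt0 | rewrite ltr0n].
by apply: psi_eq; ring.
Qed.

Lemma stepS n m : (0 < n)%N -> m = (4 + n)%N ->
  Defs.conv (pS g) (Mx 0 n) = Mx 0 m.
Proof.
move=> hn ->; rewrite !Mx0; apply/funext => x.
have ha := alpha_gt0.
rewrite (_ : pS g = fun y => psi y (- 4 * alpha g) (8 * alpha g)) // conv1; last 2 first.
- by apply: mulr_gt0.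
- by apply: mulr_gt0; [apply: mulr_gt0 | rewrite ltr0n].
by apply: psi_eq; ring.
Qed.

Lemma Mx_p1 : p1 g = Mx 1 1.
Proof.
apply/funext => x; rewrite /p1 /Mx big_ord_recl big_ord1 /= expr1 bin0 bin1.
rewrite !mul1r [in RHS]addrC (_ : bump 0 0 = 1%N) //; apply: psi2_eq; ring.
Qed.

Lemma Mx_p2 : p2 g = Mx 0 1.
Proof. by rewrite Mx0; apply/funext => x; rewrite /p2; apply: psi_eq; ring. Qed.

Lemma Mx_pS : pS g = Mx 0 4.
Proof. by rewrite Mx0; apply/funext => x; rewrite /pS; apply: psi_eq; ring. Qed.

Definition fullconv (l : seq (R -> R)) : R -> R :=
  if l is f :: fs then convl f fs else fun _ => 0.

Lemma fc_cons p l : l != [::] -> fullconv (p :: l) = Defs.conv p (fullconv l).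
Proof. by case: l. Qed.

Lemma K0 wS : fullconv (nseq wS.+1 (pS g)) = Mx 0 (4 * wS.+1).
Proof.
elim: wS => [|k IH]; first by rewrite /= Mx_pS.
have -> : nseq k.+2 (pS g) = pS g :: nseq k.+1 (pS g) by [].
by rewrite fc_cons // IH (stepS _ (4 * k.+2)%N) //; lia.
Qed.

Lemma K1 w2 wS : (0 < w2 + wS)%N ->
  fullconv (nseq w2 (p2 g) ++ nseq wS (pS g)) = Mx 0 (w2 + 4 * wS).
Proof.
elim: w2 => [|k IH] h.
  case: wS h => [//|k] _.
  by rewrite [nseq 0 _]/= cat0s K0 add0n.
have -> : nseq k.+1 (p2 g) ++ nseq wS (pS g) = p2 g :: (nseq k (p2 g) ++ nseq wS (pS g)) by [].
case E: (k + wS)%N => [|e].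
  move: E => /eqP; rewrite addn_eq0 => /andP[/eqP -> /eqP ->].
  by rewrite /= Mx_p2 muln0 addn0.
rewrite fc_cons; last by rewrite -size_eq0 size_cat !size_nseq E.
rewrite IH; last by rewrite E.
apply: step2; lia.
Qed.

Lemma K2 w1 w2 wS : (0 < w1 + w2 + wS)%N ->
  fullconv (factors g w1 w2 wS) = Mx w1 (w1 + w2 + 4 * wS).
Proof.
elim: w1 => [|k IH] h.
  by rewrite /factors [nseq 0 _]/= cat0s K1 // add0n; rewrite add0n in h.
have -> : factors g k.+1 w2 wS = p1 g :: factors g k w2 wS by [].
case E: (k + w2 + wS)%N => [|e].
  move: E => /eqP; rewrite !addn_eq0 => /andP[/andP[/eqP -> /eqP ->] /eqP ->].
  by rewrite /= Mx_p1.
rewrite fc_cons; last by rewrite -size_eq0 /factors !size_cat !size_nseq addnA E.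
rewrite IH; last by rewrite E.
apply: step1; lia.
Qed.

End G3.



Arguments Mx {R}.
Arguments alpha_gt0 {R g}.
Arguments K2 {R g}.
Section G4.
Variable R : realType.
Variable g : R.
Hypothesis hg : 0 < g.
Local Notation mu := (@lebesgue_measure R).

Lemma int_Mx w n : (0 < n)%N -> Rintegral mu `[0%R, +oo[ (Mx g w n) =
  (2^-1) ^+ w * \sum_(j < w.+1) ('C(w, j))%:R *
     Qfun (- (- alpha g * (n%:R + 2 * j%:R)) / Num.sqrt (2 * alpha g * n%:R)).
Proof.
move=> hn; have ha := alpha_gt0 hg.
have hs : 0 < 2 * alpha g * n%:R by apply: mulr_gt0; [apply: mulr_gt0 | rewrite ltr0n].
rewrite /Rintegral.
transitivity (fine (\int[mu]_(x in `[0%R, +oo[) (\sum_(j < w.+1)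
   ((2^-1) ^+ w * ('C(w, j))%:R *
     psi x (- alpha g * (n%:R + 2 * j%:R)) (2 * alpha g * n%:R))%:E))%E).
  congr fine; apply: eq_integral => x _; rewrite sumEFin /Mx mulr_sumr; congr EFin.
  by apply: eq_bigr => j _; rewrite mulrA.
rewrite ge0_integral_sum //; last 2 first.
- move=> j; apply/measurable_EFinP; apply: measurable_funTS.
  apply: measurable_funM => //; exact: measurable_psi.
- by move=> j y _; rewrite lee_fin mulr_ge0 ?psi_ge0 ?mulr_ge0 ?exprn_ge0 ?invr_ge0 ?ler0n.
have I (j : 'I_w.+1) : (\int[mu]_(x in `[0%R, +oo[) ((2^-1) ^+ w * ('C(w, j))%:R *
     psi x (- alpha g * (n%:R + 2 * j%:R)) (2 * alpha g * n%:R))%:E =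
   ((2^-1) ^+ w * ('C(w, j))%:R * Qfun (- (- alpha g * (n%:R + 2 * j%:R)) / Num.sqrt (2 * alpha g * n%:R)))%:E)%E.
  under eq_integral do rewrite EFinM.
  rewrite ge0_integralZl //.
  - by rewrite tail_psi // -EFinM.
  - by apply/measurable_EFinP; apply: measurable_funTS; exact: measurable_psi.
  - by move=> y _; rewrite lee_fin psi_ge0.
under eq_bigr do rewrite I.
rewrite sumEFin /= mulr_sumr; apply: eq_bigr => j _; by rewrite [RHS]mulrA.
Qed.

Lemma Harg (n j : nat) : (0 < n)%N ->
  - (- alpha g * (n%:R + 2 * j%:R)) / Num.sqrt (2 * alpha g * n%:R) =
  Num.sqrt ((n%:R + 2 * j%:R) ^+ 2 / n%:R * (2 * g / 5)).
Proof.
move=> hn; have ha := alpha_gt0 hg.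
have N0 : 0 < n%:R :> R by rewrite ltr0n.
have hs : 0 < 2 * alpha g * n%:R by apply: mulr_gt0; [apply: mulr_gt0 | ].
have hD : Delta R ^+ 2 = 5^-1 by rewrite /Delta exprVn sqr_sqrtr // ler0n.
have ha' : alpha g = 4 * g / 5 by rewrite /alpha hD.
have j0 : 0 <= n%:R + 2 * j%:R :> R by rewrite addr_ge0 ?mulr_ge0 ?ler0n.
rewrite -[LHS]ger0_norm; last first.
  by rewrite divr_ge0 ?sqrtr_ge0 // mulNr opprK mulr_ge0 // ltW.
rewrite -sqrtr_sqr; apply: congr1.
rewrite expr_div_n sqr_sqrtr ?ltW // ha'.
by field; rewrite gt_eqF // gt_eqF.
Qed.

Lemma PEP_eq w1 w2 wS : (0 < w1 + w2 + wS)%N ->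
  PEP_T g w1 w2 wS = PEP_closed g w1 w2 wS.
Proof.
move=> h.
have K := K2 hg _ _ _ h.
rewrite /PEP_T.
case E: (factors g w1 w2 wS) => [|f fs].
  by have := congr1 size E; rewrite /factors !size_cat !size_nseq /=; lia.
rewrite E /= in K; rewrite K int_Mx; last by lia.
rewrite /PEP_closed.
apply: congr1; apply: eq_bigr => j _; rewrite Harg //; lia.
Qed.
End G4.

Theorem theorem1 (R : realType) (C : conv_code) (gamma : R) (hgamma : 0 < gamma) :
  (\esum_(w in [set w : nat * nat * nat | (0 < w.1.1 + w.1.2 + w.2)%N])
     (beta C R w.1.1 w.1.2 w.2 * (PEP_T gamma w.1.1 w.1.2 w.2)%:E))%E
  =
  (\esum_(w in [set w : nat * nat * nat | (0 < w.1.1 + w.1.2 + w.2)%N])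
     (beta C R w.1.1 w.1.2 w.2 * (PEP_closed gamma w.1.1 w.1.2 w.2)%:E))%E.
Proof.
by apply: eq_esum => w /= hw; rewrite PEP_eq.
Qed.
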